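(* Let $q=2^h$ with $h>1$. Then there exists no finite group whose irreducible complex character degrees, with multiplicity, are $1$ ($q-1$ times), $q-1$ (once), and $q$ ($q-1$ times). *)

(* Defs.v *)
From mathcomp Require Import all_boot all_order all_algebra all_fingroup all_solvable all_field all_character.
Set Implicit Arguments. Unset Strict Implicit. Unset Printing Implicit Defensive.
Import GRing.Theory Num.Theory.
Local Open Scope ring_scope.

Definition irr_degrees (gT : finGroupType) (G : {group gT}) : seq algC :=
  [seq 'chi[G]_i 1%g | i : Iirr G].

Definition target_degrees (q : nat) : seq algC :=
  nseq q.-1 1 ++ [:: (q.-1)%:R] ++ nseq q.-1 q%:R.

(* Main.v *)
Require Import Defs.
From mathcomp Require Import all_boot all_order all_algebra all_fingroup all_solvable all_field all_character.
From mathcomp Require Import zify ring lra.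
Import GRing.Theory Num.Theory.
Local Open Scope group_scope.
Lemma inv_conj (gT : finGroupType) (w e : gT) :
  (w * w = 1)%g -> ((w * e) * (w * e) = 1)%g -> (e ^ w = e^-1)%g.
Proof.
move=> Hw He.
have Hwi : (w^-1 = w)%g by apply/eqP; rewrite eq_invg_mul Hw.
rewrite conjgE Hwi mulgA -(mulgK e (w * e * w)) -(mulgA (w * e)) He mul1g //.
Qed.

Lemma group_final (gT : finGroupType) (G D E : {group gT}) (q : nat) :
  (4 <= q)%N -> ~~ odd q -> D <| G -> E <| G -> E \subset D ->
  #|D| = (q * q.+1)%N -> #|E| = q.+1 -> #|G| = (q.-1 * (q * q.+1))%N ->
  (forall g, g \in D -> g \notin E -> #|'C_G[g]| = q) -> False.
Proof.
move=> q4 qev nDG nEG sED cD cE cG Hc.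
have [sDG nDG'] := andP nDG; have [sEG nEG'] := andP nEG.
have [t Dt ot] : {t : gT | t \in D & #[t] = 2}%g.
  apply: Cauchy => //; rewrite cD dvdn_mulr //.
  by rewrite dvdn2.
have oddE : odd #|E| by rewrite cE /= qev.
have notE x : x \in E -> #[x]%g = 2 -> False.
  move=> Ex ox; have := order_dvdG Ex; rewrite ox => H.
  by have := dvdn_odd H oddE.
have nEt : t \notin E by apply/negP => Et; exact: notE Et ot.
pose S := D :\: E.
have cS : #|S| = (q.-1 * q.+1)%N.
  by rewrite cardsD (setIidPr sED) cD cE; lia.
have tt : (t * t = 1)%g by apply/eqP; rewrite -expg2 -ot expg_order.
have Ct : #|t ^: G| = (q.-1 * q.+1)%N.
  rewrite -index_cent1.
  have := Lagrange (subsetIl G 'C[t]); rewrite Hc // cG => H.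
  apply/eqP; rewrite -(eqn_pmul2l (_ : 0 < q)%N); last by lia.
  by rewrite H; apply/eqP; lia.
have tGS : t ^: G = S.
  apply/eqP; rewrite eqEcard Ct cS leqnn andbT.
  apply/subsetP => y /imsetP [x Gx ->]; rewrite inE.
  by rewrite !memJ_norm ?(subsetP nDG' x Gx) ?(subsetP nEG' x Gx) // nEt Dt.
have invS y : y \in S -> (y * y = 1)%g.
  by rewrite -tGS => /imsetP [x Gx ->]; rewrite -conjMg tt conj1g.
have [e Ee ne1] : exists2 e, e \in E & e != 1%g.
  by apply/trivgPn; rewrite -cardG_gt1 cE ltnS (leq_trans _ q4).
have [v Sv nv] : exists2 v, v \in S & v \notin t *: E.
  apply/subsetPn; apply: contraTN (isT : true) => H.
  have := subset_leq_card H; rewrite card_lcoset cS cE leqNgt ltn_Pmull //.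
  by clear -q4; rewrite -subn1 ltn_subRL; lia.
have ti : (t^-1 = t)%g by apply/eqP; rewrite eq_invg_mul tt.
have Stv : t * v \in S.
  rewrite inE; apply/andP; split; first by move: nv; rewrite mem_lcoset ti.
  by apply: groupM => //; move: Sv; rewrite inE => /andP [].
have Smul y : y \in S -> y * e \in S.
  rewrite !inE => /andP [nEy Dy]; rewrite groupMr // nEy /=.
  by apply: groupM => //; exact: (subsetP sED).
have He1 : (e ^ (t * v) = e^-1)%g.
  by apply: inv_conj; [apply: invS | apply: invS; apply: Smul].
have Het : (e ^ t = e^-1)%g.
  apply: inv_conj; first exact: tt.
  by apply: invS; apply: Smul; rewrite inE nEt Dt.
have Hev : (e ^ v = e^-1)%g.
  by apply: inv_conj; [apply: invS | apply: invS; apply: Smul].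
move: He1; rewrite conjgM Het conjVg Hev invgK => Hee.
have ee : (e * e = 1)%g by apply/eqP; rewrite -eq_invg_mul -Hee.
have : (#[e] %| 2)%N by rewrite order_dvdn expg2 ee.
have := order_dvdG Ee; rewrite cE => H1 H2.
have : (#[e] %| gcdn 2 q.+1)%N by rewrite dvdn_gcd H2 H1.
have -> : gcdn 2 q.+1 = 1%N by apply/eqP; rewrite -/(coprime 2 q.+1) coprime2n /= qev.
by rewrite dvdn1 order_eq1 (negbTE ne1).
Qed.

Local Close Scope group_scope.
Local Open Scope ring_scope.

Section Main.
Variables (gT : finGroupType) (G : {group gT}) (q : nat).
Hypotheses (q4 : (4 <= q)%N) (qeven : ~~ odd q)
  (Hdeg : perm_eq (irr_degrees G) (target_degrees q)).

Lemma sum_deg (F : algC -> algC) :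
  \sum_i F ('chi[G]_i 1%g) = F 1 *+ q.-1 + F (q.-1)%:R + F q%:R *+ q.-1.
Proof.
transitivity (\sum_(x <- irr_degrees G) F x).
  by rewrite /irr_degrees big_image.
rewrite (perm_big _ Hdeg) /target_degrees !big_cat /= !big_nseq big_seq1.
by rewrite !iter_addr_0 addrA.
Qed.

Lemma card_degP (P : pred algC) :
  #|[pred i | P ('chi[G]_i 1%g)]|%:R =
    ((P 1)%:R *+ q.-1 + (P (q.-1)%:R)%:R + (P q%:R)%:R *+ q.-1 : algC).
Proof.
rewrite -(sum_deg (fun y => (P y)%:R)) -sum1_card natr_sum big_mkcond /=.
by apply: eq_bigr => i _; rewrite inE; case: (P _).
Qed.

Lemma neq1q1 : (1 == (q.-1)%:R :> algC) = false.
Proof. by rewrite -[1]/(1%:R) eqr_nat; apply/eqP; lia. Qed.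
Lemma neq1q : (1 == q%:R :> algC) = false.
Proof. by rewrite -[1]/(1%:R) eqr_nat; apply/eqP; lia. Qed.
Lemma neqq1q : ((q.-1)%:R == q%:R :> algC) = false.
Proof. by rewrite eqr_nat; apply/eqP; lia. Qed.
Lemma neq1q1' : ((q.-1)%:R == 1 :> algC) = false.
Proof. by rewrite eq_sym neq1q1. Qed.
Lemma neq1q' : (q%:R == 1 :> algC) = false.
Proof. by rewrite eq_sym neq1q. Qed.
Lemma neqq1q' : (q%:R == (q.-1)%:R :> algC) = false.
Proof. by rewrite eq_sym neqq1q. Qed.
Definition neqs := (neq1q1, neq1q, neqq1q, neq1q1', neq1q', neqq1q').

Local Notation d i := ('chi[G]_i 1%g).

Lemma deg_cases i : [\/ d i = 1, d i = (q.-1)%:R | d i = q%:R].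
Proof.
have := card_degP [pred x | [&& x != 1, x != (q.-1)%:R & x != q%:R]].
rewrite /= !eqxx ?neqs /= ?andbF !mul0rn !addr0.
move/eqP; rewrite pnatr_eq0 => /eqP/card0_eq/(_ i); rewrite !inE.
case: (d i =P 1) => [->|H1]; first by constructor 1.
case: (d i =P (q.-1)%:R) => [->|H2]; first by constructor 2.
case: (d i =P q%:R) => [->|H3]; first by constructor 3.
by move=> /= H; discriminate H.
Qed.

Lemma card_lin : #|[pred i | d i == 1]| = q.-1.
Proof.
have := card_degP [pred x | x == 1]; rewrite /= eqxx ?neqs.
by move=> H; apply/eqP; rewrite -(eqr_nat algC) H ?mul0rn ?mulr0n ?mulr1n ?addr0 ?add0r.
Qed.

Lemma card_Psi : #|[pred i | d i == q%:R]| = q.-1.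
Proof.
have := card_degP [pred x | x == q%:R]; rewrite /= eqxx ?neqs.
by move=> H; apply/eqP; rewrite -(eqr_nat algC) H ?mul0rn ?mulr0n ?mulr1n ?addr0 ?add0r.
Qed.

Lemma card_chi : #|[pred i | d i == (q.-1)%:R]| = 1%N.
Proof.
have := card_degP [pred x | x == (q.-1)%:R]; rewrite /= eqxx ?neqs.
by move=> H; apply/eqP; rewrite -(eqr_nat algC) H ?mul0rn ?mulr0n ?mulr1n ?addr0 ?add0r.
Qed.

Lemma exists_chi : {i0 | d i0 = (q.-1)%:R}.
Proof.
case: (pickP [pred i | d i == (q.-1)%:R]) => [i /eqP Hi| H]; first by exists i.
by have := card_chi; rewrite (eq_card0 H).
Qed.

Lemma uniq_chi i j : d i = (q.-1)%:R -> d j = (q.-1)%:R -> i = j.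
Proof.
move=> Hi Hj; have : (#|[pred i | d i == (q.-1)%:R]| <= 1)%N by rewrite card_chi.
by move/card_le1_eqP; apply; rewrite inE /= ?Hi ?Hj.
Qed.

Lemma isLin i : ('chi_i \is a linear_char) = (d i == 1).
Proof. by rewrite qualifE/= irr_char. Qed.

Lemma cardG : #|G| = (q.-1 * (q * q.+1))%N.
Proof.
apply/eqP; rewrite -(eqr_nat algC) -irr_sum_square (sum_deg (fun x => x ^+ 2)).
rewrite expr1n -!natrX -!mulrnA -!natrD eqr_nat; apply/eqP.
have -> : q = (q.-1).+1 by lia.
rewrite /=. nia.
Qed.

Variable i0 : Iirr G.
Hypothesis Hi0 : d i0 = (q.-1)%:R.
Local Notation chi := ('chi[G]_i0).
Local Notation G' := (G^`(1))%g.

Lemma sum_split (V : zmodType) (f : Iirr G -> V) :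
  \sum_i f i = \sum_(i | d i == 1) f i + f i0 + \sum_(i | d i == q%:R) f i.
Proof.
rewrite (bigID [pred i | d i == 1]) /= -addrA; congr (_ + _).
rewrite (bigD1 i0) /=; last by rewrite Hi0 neqs.
congr (_ + _); apply: eq_bigl => i.
case: (deg_cases i) => H; rewrite H ?eqxx ?neqs ?andbF ?andbT //=.
by rewrite (uniq_chi _ _ H Hi0) eqxx.
by apply/negP => /eqP Hii; move: H; rewrite Hii Hi0 => /eqP; rewrite neqs.
Qed.

Lemma lin_der1 {i g} : d i = 1 -> g \in G' -> 'chi_i g = 1.
Proof.
move=> Hi Hg; have := lin_char_der1 (_ : 'chi_i \is a linear_char).
rewrite isLin Hi eqxx => /(_ isT) /subsetP /(_ g Hg).
by rewrite cfkerEirr inE Hi => /eqP.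
Qed.

Lemma chi_lin {i} : d i = 1 -> 'chi_i * chi = chi.
Proof.
move=> Hi; have : 'chi_i * chi \in irr G by rewrite mul_lin_irr ?mem_irr // isLin Hi.
case/irrP=> j Hj; rewrite Hj; congr 'chi__; apply: uniq_chi => //.
by rewrite -Hj cfunE Hi Hi0 mul1r.
Qed.

Lemma notder {g} : g \in G -> g \notin G' -> exists2 i, d i = 1 & 'chi_i g != 1.
Proof.
move=> Gg; rewrite -cap_cfker_lin_irr => Hg.
have : ~~ [forall i : Iirr G, ('chi_i \is a linear_char) ==> (g \in cfker 'chi_i)].
  move: Hg; apply: contra => /forallP H; apply/bigcapP => i Hi; exact: (implyP (H i) Hi).
rewrite negb_forall => /existsP [i]; rewrite negb_imply isLin => /andP [/eqP Hl Hk].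
by exists i => //; move: Hk; rewrite cfkerEirr inE Hl.
Qed.

Lemma chi_out {g} : g \notin G' -> chi g = 0.
Proof.
move=> Hg; have [Gg|nGg] := boolP (g \in G); last by rewrite cfun0.
have [i Hi Hig] := notder Gg Hg.
have := congr1 (fun f : 'CF(G) => f g) (chi_lin Hi); rewrite cfunE => /eqP.
rewrite -subr_eq0 -{2}[chi g]mul1r -mulrBl mulf_eq0 subr_eq0 (negbTE Hig) /=.
by move/eqP.
Qed.

Lemma chi_conj g : (chi g)^* = chi g.
Proof.
have := cfConjC_irr i0; case/irrP=> j Hj.
have Hji : j = i0.
  apply: uniq_chi Hi0; by rewrite -Hj cfConjC_char1 ?irr_char.
by rewrite -cfConjCE Hj Hji.
Qed.

Lemma sum_lin_const (x : algC) : \sum_(i | d i == 1) x = x *+ q.-1.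
Proof. by rewrite sumr_const card_lin. Qed.

Lemma sum_Psi_const (x : algC) : \sum_(i | d i == q%:R) x = x *+ q.-1.
Proof. by rewrite sumr_const card_Psi. Qed.

Lemma chi2_lin i : d i = 1 -> '[chi * chi, 'chi_i] = 1.
Proof.
move=> Hi; transitivity '[chi, chi]; last exact: cfnorm_irr.
rewrite !cfdotE; congr (_ * _); apply: eq_bigr => x Gx.
rewrite cfunE chi_conj -mulrA; congr (_ * _).
have := congr1 (fun f : 'CF(G) => f x) (chi_lin Hi); rewrite cfunE => H.
have [->|nz] := eqVneq (chi x) 0; first by rewrite mul0r.
have -> : 'chi_i x = 1 by apply: (mulIf nz); rewrite mul1r.
by rewrite conjC1 mulr1.
Qed.

Lemma arith1 m c D : (2 <= m)%N -> (m.+1 * D + m * (c + 1) = m * m)%N -> c = m.-1 /\ D = 0%N.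
Proof.
move=> m2 H.
have cle : (c <= m.-1)%N by nia.
have H2 : (m.+1 * D = m * (m.-1 - c))%N by nia.
have : (m.+1 %| m * (m.-1 - c))%N by rewrite -H2 dvdn_mulr.
rewrite Gauss_dvdr; last by rewrite coprime_sym coprimenS.
case: (posnP (m.-1 - c)) => [z|pos].
  by move=> _; rewrite z muln0 in H2; split; nia.
by move/dvdn_leq => /(_ pos); lia.
Qed.

Lemma chi2_coef : '[chi * chi, chi] = (q.-2)%:R /\
   forall j, d j = q%:R -> '[chi * chi, 'chi_j] = 0.
Proof.
have Nc j : '[chi * chi, 'chi_j] \is a Num.nat.
  by rewrite Cnat_cfdot_char ?rpredM ?irr_char.
have H1 : (chi * chi) 1%g = \sum_i '[chi * chi, 'chi_i] * d i.
  by rewrite {1}[chi * chi]cfun_sum_cfdot sum_cfunE; apply: eq_bigr => i _; rewrite cfunE.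
rewrite sum_split in H1.
have E1 : \sum_(i | d i == 1) '[chi * chi, 'chi_i] * d i = 1 *+ q.-1.
  rewrite -sum_lin_const; apply: eq_bigr => i /eqP Hi; by rewrite chi2_lin ?Hi ?mulr1.
have E2 : \sum_(i | d i == q%:R) '[chi * chi, 'chi_i] * d i =
   (\sum_(i | d i == q%:R) '[chi * chi, 'chi_i]) * q%:R.
  rewrite mulr_suml; apply: eq_bigr => i /eqP ->; done.
rewrite E1 E2 cfunE Hi0 in H1.
have ND : \sum_(j | d j == q%:R) '[chi * chi, 'chi_j] \is a Num.nat by rewrite rpred_sum.
case/natrP: ND => D HD; case/natrP: (Nc i0) => c Hc.
rewrite HD Hc in H1.
have : (q * D + q.-1 * (c + 1) = q.-1 * q.-1)%N.
  apply/eqP; rewrite -(eqr_nat algC) !natrD !natrM H1.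
  by apply/eqP; rewrite natrD; ring.
have Hq : q = q.-1.+1 by lia.
rewrite {1}Hq; case/arith1 => [|cE DE]; first lia.
split; first by rewrite Hc cE; congr _%:R; lia.
move=> j /eqP Hj; move: HD; rewrite DE => /eqP; rewrite psumr_eq0.
  by move/allP/(_ j (mem_index_enum j)); rewrite Hj /= => /eqP.
by move=> k _; rewrite natr_ge0.
Qed.

Lemma chi2_dec : chi * chi = \sum_(i | d i == 1) 'chi_i + (q.-2)%:R *: chi.
Proof.
have [Hc Hd] := chi2_coef.
rewrite {1}[chi * chi]cfun_sum_cfdot sum_split Hc.
rewrite [\sum_(i | d i == q%:R) _]big1 ?addr0; last by move=> j /eqP Hj; rewrite Hd ?scale0r.
by congr (_ + _); apply: eq_bigr => i /eqP Hi; rewrite chi2_lin ?scale1r.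
Qed.

Lemma chi_der {g} : g \in G' -> chi g = (q.-1)%:R \/ chi g = -1.
Proof.
move=> Hg; have := congr1 (fun f : 'CF(G) => f g) chi2_dec.
rewrite !cfunE sum_cfunE (eq_bigr (fun _ => 1)); last by move=> i /eqP Hi; rewrite lin_der1.
rewrite sum_lin_const => /eqP.
have -> : (q.-2)%:R = (q.-1)%:R - 1 :> algC.
  by rewrite (_ : q.-1 = (q.-2).+1) ?mulrS; [ring | lia].
rewrite -subr_eq0.
have -> : chi g * chi g - (1 *+ q.-1 + ((q.-1)%:R - 1) * chi g) = (chi g - (q.-1)%:R) * (chi g + 1).
  by rewrite -[1 *+ _]/((q.-1)%:R); ring.
by rewrite mulf_eq0 subr_eq0 addr_eq0 => /orP [/eqP|/eqP]; [left|right].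
Qed.

Local Notation E := (cfker chi).

Lemma memE g : (g \in E) = (chi g == (q.-1)%:R).
Proof. by rewrite cfkerEirr inE Hi0. Qed.

Lemma q1_neq0 : (q.-1)%:R != 0 :> algC.
Proof. by rewrite pnatr_eq0; apply/eqP; lia. Qed.

Lemma q_neq0 : q%:R != 0 :> algC.
Proof. by rewrite pnatr_eq0; apply/eqP; lia. Qed.

Lemma E_sub : E \subset G'.
Proof.
apply/subsetP => g; rewrite memE; apply: contraLR => /chi_out ->.
by rewrite eq_sym q1_neq0.
Qed.

Lemma chi_DE g : g \in G' -> g \notin E -> chi g = -1.
Proof. by move=> Hg; rewrite memE; case: (chi_der Hg) => ->; rewrite ?eqxx. Qed.

Lemma cardGder : #|G'| = (q * q.+1)%N.
Proof.
have := Lagrange (der_sub 1 G); rewrite -card_lin_irr cardG.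
rewrite (eq_card (B := [pred i | d i == 1])); last by move=> i; rewrite !inE isLin.
rewrite card_lin mulnC => /eqP; rewrite eqn_mul2l => /orP [/eqP|/eqP //]; lia.
Qed.

Lemma i0_neq0 : i0 != 0.
Proof. by apply/eqP => H; move: Hi0; rewrite H irr0 cfun11 => /eqP; rewrite neqs. Qed.

Lemma cardE : #|E| = q.+1.
Proof.
have H0 : \sum_(x in G) chi x = 0.
  have := cfdot_irr i0 0; rewrite (negbTE i0_neq0) cfdotE => /eqP.
  rewrite mulf_eq0 invr_eq0 (negbTE (neq0CG G)) /= => /eqP Hs; rewrite -[RHS]Hs.
  by apply: eq_bigr => x Gx; rewrite irr0 cfun1E Gx conjC1 mulr1.
rewrite (big_setID G') /= (setIidPr (der_sub 1 G)) in H0.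
rewrite [X in _ + X]big1 ?addr0 in H0; last by move=> x /setDP [_ Hx]; rewrite chi_out.
rewrite (big_setID E) /= (setIidPr E_sub) in H0.
rewrite (eq_bigr (fun _ => (q.-1)%:R)) in H0; last by move=> x; rewrite memE => /eqP.
rewrite [X in _ + X](eq_bigr (fun _ => -1)) in H0; last by move=> x /setDP [Hx nHx]; rewrite chi_DE.
rewrite !sumr_const cardsD (setIidPr E_sub) cardGder in H0.
have Hle : (#|E| <= q * q.+1)%N by rewrite -cardGder subset_leq_card // E_sub.
move/eqP: H0; rewrite mulNrn -mulrnA natrB // => /eqP H.
have H2 : (((q.-1 * #|E|) + #|E|)%N%:R : algC) = (q * q.+1)%N%:R.
  by apply/eqP; rewrite -subr_eq0 -H natrD natrM; apply/eqP; ring.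
move/eqP: H2; rewrite eqr_nat => /eqP {}H.
move: H; set e := #|E| => H.
have H3 : (q * e = q * q.+1)%N.
  rewrite -H; case: (q) q4 => // n _; by rewrite mulSn addnC.
by apply/eqP; rewrite -(eqn_pmul2l (_ : 0 < q)%N) ?H3 //; lia.
Qed.

Local Notation theta g := (\sum_(j | d j == q%:R) 'chi_j g).

Lemma orth1 {g} : g \in G -> g != 1%g ->
  \sum_(i | d i == 1) 'chi_i g + (q.-1)%:R * chi g + q%:R * theta g = 0.
Proof.
move=> Gg ng1; have := second_orthogonality_relation g (group1 G).
rewrite class1G inE (negbTE ng1) mulr0n sum_split Hi0 conjC_nat.
rewrite (eq_bigr (fun i => 'chi_i g)); last first.
  by move=> i /eqP ->; rewrite conjC1 mulr1.
rewrite [X in _ + X](eq_bigr (fun i => q%:R * 'chi_i g)); last first.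
  by move=> i /eqP ->; rewrite conjC_nat mulrC.
by rewrite -mulr_sumr mulrC.
Qed.

Lemma theta_E g : g \in E -> g != 1%g -> theta g = - (q.-1)%:R.
Proof.
move=> Eg ng1; have Gg : g \in G'. by apply: (subsetP E_sub).
have := orth1 (subsetP (der_sub 1 G) g Gg) ng1.
rewrite (eq_bigr (fun _ => 1)); last by move=> i /eqP Hi; rewrite lin_der1.
rewrite sum_lin_const; move: Eg; rewrite memE => /eqP ->.
move/eqP; rewrite addrC addr_eq0 => /eqP H.
apply: (mulfI q_neq0); rewrite H.
have -> : q = q.-1.+1 by lia.
by rewrite mulrS; ring.
Qed.

Lemma theta_DE g : g \in G' -> g \notin E -> theta g = 0.
Proof.
move=> Gg nEg; have ng1 : g != 1%g.
  by apply: contraNneq nEg => ->; apply: group1.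
have := orth1 (subsetP (der_sub 1 G) g Gg) ng1.
rewrite (eq_bigr (fun _ => 1)); last by move=> i /eqP Hi; rewrite lin_der1.
rewrite sum_lin_const chi_DE // mulrN1 addrN add0r => /eqP.
by rewrite mulf_eq0 (negbTE q_neq0) => /eqP.
Qed.

Lemma theta_1 : theta 1%g = q%:R *+ q.-1.
Proof. by rewrite -sum_Psi_const; apply: eq_bigr => i /eqP. Qed.

Local Notation D := (G^`(1))%G.
Local Notation EG := (cfker_group chi).
Local Notation Th := ('Res[D] (\sum_(j | d j == q%:R) 'chi_j)).

Lemma ThE g : g \in G' -> Th g = theta g.
Proof. by move=> Hg; rewrite cfResE ?der_sub // sum_cfunE. Qed.

Lemma Th_char : Th \is a character.
Proof. by rewrite cfRes_char // rpred_sum // => j _; apply: irr_char. Qed.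

Lemma card_E1 : #|[pred x | (x \in E) && (x != 1%g)]| = q.
Proof.
have := cardD1 1%g E; rewrite group1 cardE add1n => -[->].
by apply: eq_card => x; rewrite !inE andbC.
Qed.

Lemma sumE_split (f : gT -> algC) :
  \sum_(x in G') theta x * f x =
    q%:R *+ q.-1 * f 1%g - (q.-1)%:R * \sum_(x in E | x != 1%g) f x.
Proof.
rewrite (big_setID E) /= (setIidPr E_sub).
rewrite [X in _ + X]big1 ?addr0; last first.
  by move=> x /setDP [Hx nHx]; rewrite theta_DE ?mul0r.
rewrite (bigD1 1%g) ?group1 //= theta_1; congr (_ + _).
rewrite mulr_sumr -sumrN; apply: eq_bigr => x /andP [Ex nx1].
by rewrite theta_E // mulNr.
Qed.

Lemma cardD : #|D| = (q * q.+1)%N.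
Proof. exact: cardGder. Qed.

Lemma Th_norm : '[Th] = ((q.-1) ^ 2)%:R.
Proof.
rewrite cfdotE (eq_bigr (fun x => theta x * (theta x)^*)); last first.
  by move=> x Hx; rewrite ThE.
rewrite sumE_split theta_1 (eq_bigr (fun _ => - (q.-1)%:R)); last first.
  by move=> x /andP [Ex nx1]; rewrite theta_E // conj_intr // rpredN rpred_nat.
rewrite sumr_const card_E1 cardD.
rewrite [(_ *+ q.-1)^*]conj_intr ?rpredMn ?rpred_nat ?rpred1 //.
rewrite -(mulr_natr (q%:R) q.-1) -(mulr_natr (1 *- q.-1) q).
rewrite natrX !natrM mulrSr.
field; rewrite q_neq0 andbT -mulrSr pnatr_eq0 //.
Qed.

Lemma c_val k : \sum_(x in E) 'chi[D]_k x = #|E|%:R * '['Res[EG] 'chi[D]_k, 1].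
Proof.
rewrite cfdotE mulrA mulfV ?neq0CG // mul1r.
apply: eq_bigr => x Ex; rewrite cfun1E Ex conjC1 mulr1 cfResE //.
exact: E_sub.
Qed.

Lemma c_val' k : \sum_(x in E) ('chi[D]_k x)^* = #|E|%:R * '[1, 'Res[EG] 'chi[D]_k].
Proof.
rewrite cfdotE mulrA mulfV ?neq0CG // mul1r.
apply: eq_bigr => x Ex; rewrite cfun1E Ex mul1r cfResE //.
exact: E_sub.
Qed.

Lemma n_val k : q%:R * '[Th, 'chi[D]_k] =
  (q.-1)%:R * ('chi[D]_k 1%g - '['Res[EG] 'chi[D]_k, 1]).
Proof.
set n := '[Th, _]; set c := '[_, 1]; set f := 'chi_k 1%g.
have H1 : #|D|%:R * n = \sum_(x in G') theta x * ('chi_k x)^*.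
  rewrite /n cfdotE mulrA mulfV ?neq0CG // mul1r.
  by apply: eq_bigr => x Hx; rewrite ThE.
rewrite sumE_split cardD in H1.
have Hc : c^* = c by rewrite conj_natr // Cnat_cfdot_char ?cfRes_char ?irr_char ?cfun1_char.
have Hf : f^* = f by rewrite conj_natr // Cnat_irr1.
have HS : \sum_(x in E | x != 1%g) ('chi_k x)^* = (q.+1)%:R * c - f.
  have := c_val' k; rewrite cfdotC -/c Hc cardE (bigD1 1%g) ?group1 //= -/f Hf => H.
  by rewrite -H; ring.
rewrite HS Hf in H1.
have nz : (q.+1)%:R != 0 :> algC by rewrite pnatr_eq0.
apply: (mulfI nz); move: H1.
rewrite -(mulr_natr (q%:R) q.-1) !natrM !mulrSr.
move=> H1; rewrite mulrA [_ * q%:R]mulrC -mulrSr.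
rewrite mulrSr H1; ring.
Qed.

Lemma n_nat k : '[Th, 'chi[D]_k] \is a Num.nat.
Proof. by rewrite Cnat_cfdot_char ?Th_char ?irr_char. Qed.

Lemma n_dvd k : exists m, '[Th, 'chi[D]_k] = (m * q.-1)%:R.
Proof.
have := n_val k.
case/natrP: (n_nat k) => a ->; case/natrP: (Cnat_irr1 k) => f ->.
case/natrP: (Cnat_cfdot_char (cfRes_char EG (irr_char k)) (cfun1_char EG)) => b ->.
move=> H.
have H2 : (q * a + q.-1 * b = q.-1 * f)%N.
  by apply/eqP; rewrite -(eqr_nat algC) !natrD !natrM H; apply/eqP; ring.
have : (q.-1 %| q * a)%N.
  have -> : (q * a = q.-1 * f - q.-1 * b)%N by lia.
  by rewrite -mulnBr dvdn_mulr.
rewrite Gauss_dvdr; last first.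
  by rewrite {2}(_ : q = q.-1.+1) ?coprimenS //; lia.
case/dvdnP => m ->; by exists m.
Qed.

Lemma single : exists k0, '[Th, 'chi[D]_k0] = (q.-1)%:R /\
  forall k, k != k0 -> '[Th, 'chi[D]_k] = 0.
Proof.
have Hs : \sum_k '[Th, 'chi[D]_k] ^+ 2 = ((q.-1)^2)%:R.
  rewrite -Th_norm cfdot_sum_irr; apply: eq_bigr => k _.
  by rewrite conj_natr ?n_nat // expr2.
pose F k := '[Th, 'chi[D]_k] ^+ 2 / ((q.-1)%:R ^+ 2).
have FN k : F k \is a Num.nat.
  case: (n_dvd k) => m Hm; rewrite /F Hm natrM exprMn mulfK ?expf_neq0 ?q1_neq0 //.
  by rewrite rpredX ?rpred_nat.
have F1 : \sum_k F k = 1.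
  by rewrite /F -mulr_suml Hs natrX mulfV // expf_neq0 // q1_neq0.
have [k0 [_ Fk0 Fk]] := natr_sum_eq1 (fun k _ => FN k) F1.
exists k0; split.
  move: Fk0; case: (n_dvd k0) => m Hm; rewrite /F Hm natrM exprMn mulfK ?expf_neq0 ?q1_neq0 //.
  rewrite -natrX -[1]/(1%:R) => /eqP; rewrite eqr_nat => /eqP.
  move=> Hm2; have -> : m = 1%N by nia.
  by rewrite mul1r.
move=> k nk; have := Fk k nk isT.
case: (n_dvd k) => m Hm; rewrite /F Hm natrM exprMn mulfK ?expf_neq0 ?q1_neq0 //.
by move/eqP; rewrite expf_eq0 /= => /eqP ->; rewrite mul0r.
Qed.

Lemma psi_vanish j g : d j = q%:R -> g \in G' -> g \notin E -> 'chi_j g = 0.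
Proof.
move=> Hj Hg nEg.
case: single => k0 [Hk0 Hk].
have Hres k : k != k0 -> '['Res[D] 'chi_j, 'chi[D]_k] = 0.
  move=> nk; have := Hk k nk; rewrite linear_sum cfdot_suml => H.
  apply: (psumr_eq0P _ H); first by move=> i _; rewrite natr_ge0 // Cnat_cfdot_char ?cfRes_char ?irr_char.
  by rewrite Hj.
have Hth : Th g = 0 by rewrite ThE // theta_DE.
have Hchi0 : 'chi[D]_k0 g = 0.
  have E1 := cfun_sum_cfdot Th.
  have E2 : Th = (q.-1)%:R *: 'chi[D]_k0.
    rewrite {1}E1 (bigD1 k0) //= [X in _ + X]big1 ?addr0 ?Hk0 //.
    by move=> k nk; rewrite Hk ?scale0r.
  by move: Hth; rewrite E2 cfunE => /eqP; rewrite mulf_eq0 (negbTE q1_neq0) => /eqP.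
rewrite -(cfResE _ (der_sub 1 G) Hg).
have E3 := cfun_sum_cfdot ('Res[D] 'chi_j).
rewrite {1}E3 sum_cfunE big1 //.
move=> k _; case: (eqVneq k k0) => [->|nk]; rewrite cfunE ?Hchi0 ?mulr0 //.
by rewrite Hres // mul0r.
Qed.

Lemma cent_q g : g \in G' -> g \notin E -> #|'C_G[g]%g| = q.
Proof.
move=> Hg nEg; have Gg : g \in G by apply: (subsetP (der_sub 1 G)).
have := second_orthogonality_relation g Gg; rewrite class_refl mulr1n sum_split.
rewrite (eq_bigr (fun _ => 1)); last by move=> i /eqP Hi; rewrite lin_der1 // conjC1 mulr1.
rewrite [X in _ + X]big1; last by move=> j /eqP Hj; rewrite psi_vanish ?mul0r.
rewrite sum_lin_const chi_DE // conj_intr ?rpredN ?rpred1 // mulN1r opprK addr0.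
rewrite -[1 *+ q.-1 + 1]mulrSr => /eqP; rewrite eqr_nat => /eqP <-; lia.
Qed.

Lemma contra_all : False.
Proof.
apply: (@group_final gT G G' (cfker_group chi) q) => //.
- exact: der_normal.
- exact: cfker_normal.
- exact: E_sub.
- exact: cardGder.
- exact: cardE.
- exact: cardG.
- by move=> g Hg nEg; apply: cent_q.
Qed.

End Main.
Local Close Scope ring_scope.

Theorem mainTheorem10 (h : nat) (h_gt1 : (1 < h)%N) :
  forall (gT : finGroupType) (G : {group gT}),
    ~ perm_eq (irr_degrees G) (target_degrees (2 ^ h)).
Proof.
move=> gT G Hp.
have q4 : (4 <= 2 ^ h)%N by rewrite -[4%N]/(2 ^ 2)%N leq_exp2l.
have qe : ~~ odd (2 ^ h) by rewrite oddX negb_or /= andbT; apply/eqP => h0; rewrite h0 in h_gt1.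
have [i0 Hi0] := @exists_chi gT G (2 ^ h) q4 qe Hp.
exact: (@contra_all gT G (2 ^ h) q4 qe Hp i0 Hi0).
Qed.
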